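(* Let $\lambda_1,\lambda_2\in\Delta$, $(s,p)=(\lambda_1+\lambda_2,\lambda_1\lambda_2)\in\Gamma$, and let $\beta\in\mathbb{C}$ with $|\beta|\le1$ be such that $s=\beta+\bar\beta p$, where, in the case $|p|=1$, $\beta=\tfrac12 s$. Let $a\in\mathbb{C}$. The following statements are equivalent: (1) $(a,s,p)\in\overline{\mathcal{P}}$; (2) $(a,s,p)\in\overline{\mathcal{P}_\mu}$; (3) $|a|\le\left|1-\dfrac{\tfrac12 s\bar\beta}{1+\sqrt{1-|\beta|^2}}\right|$; (4) $|a|\le\tfrac12|1-\bar\lambda_2\lambda_1|+\tfrac12(1-|\lambda_1|^2)^{1/2}(1-|\lambda_2|^2)^{1/2}$; (5) $|\Psi_z(a,s,p)|\le1$ for all $z\in\mathbb{D}$; (6) there exists $A\in\mathbb{C}^{2\times2}$ with $\|A\|\le1$ and $\pi(A)=(a,s,p)$; (7) there exists $A\in\mathbb{C}^{2\times2}$ with $\mu_E(A)\le1$ and $\pi(A)=(a,s,p)$.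
   Context: $\mathbb{D}$ is the open and $\Delta$ the closed unit disc; $\Gamma=\{(z+w,zw):|z|\le1,|w|\le1\}$ (closure of the symmetrised bidisc $\mathbb{G}$); for $(s,p)\in\Gamma$ and $z\in\mathbb{D}$ one has $1-sz+pz^2\neq0$. $\mathbb{B}$ is the open unit ball of $\mathbb{C}^{2\times2}$ (operator norm); $\pi(A)=(a_{21},\operatorname{tr}A,\det A)$; $\mathcal{P}=\pi(\mathbb{B})$ and $\overline{\mathcal{P}}$ is its closure in $\mathbb{C}^3$. $E=\{\begin{pmatrix}z&w\\0&z\end{pmatrix}:z,w\in\mathbb{C}\}$, $1/\mu_E(A)=\inf\{\|X\|:X\in E,\det(I-AX)=0\}$; $\mathcal{P}_\mu=\{\pi(A):\mu_E(A)<1\}$, with closure $\overline{\mathcal{P}_\mu}$. $\Psi_z(a,s,p)=a(1-|z|^2)/(1-sz+pz^2)$. *)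

(* Defs.v *)
From Stdlib Require Import Reals Lra.
Open Scope R_scope.

Definition Cx : Type := (R * R)%type.
Definition RtoC (x : R) : Cx := (x, 0).
Definition Czero : Cx := (0, 0).
Definition Cone : Cx := (1, 0).
Definition Cadd (z w : Cx) : Cx := (fst z + fst w, snd z + snd w).
Definition Copp (z : Cx) : Cx := (- fst z, - snd z).
Definition Csub (z w : Cx) : Cx := Cadd z (Copp w).
Definition Cmul (z w : Cx) : Cx :=
  (fst z * fst w - snd z * snd w, fst z * snd w + snd z * fst w).
Definition Cconj (z : Cx) : Cx := (fst z, - snd z).
Definition Cnorm2 (z : Cx) : R := fst z * fst z + snd z * snd z.
Definition Cmod (z : Cx) : R := sqrt (Cnorm2 z).
Definition Cinv (z : Cx) : Cx := (fst z / Cnorm2 z, - snd z / Cnorm2 z).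
Definition Cdiv (z w : Cx) : Cx := Cmul z (Cinv w).

Definition in_closed_disc (z : Cx) : Prop := Cmod z <= 1.
Definition in_open_disc (z : Cx) : Prop := Cmod z < 1.

Record M2 : Type := mkM2 { m11 : Cx; m12 : Cx; m21 : Cx; m22 : Cx }.
Definition V2 : Type := (Cx * Cx)%type.
Definition M2apply (A : M2) (v : V2) : V2 :=
  (Cadd (Cmul (m11 A) (fst v)) (Cmul (m12 A) (snd v)),
   Cadd (Cmul (m21 A) (fst v)) (Cmul (m22 A) (snd v))).
Definition M2mul (A B : M2) : M2 :=
  mkM2 (Cadd (Cmul (m11 A) (m11 B)) (Cmul (m12 A) (m21 B)))
       (Cadd (Cmul (m11 A) (m12 B)) (Cmul (m12 A) (m22 B)))
       (Cadd (Cmul (m21 A) (m11 B)) (Cmul (m22 A) (m21 B)))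
       (Cadd (Cmul (m21 A) (m12 B)) (Cmul (m22 A) (m22 B))).
Definition M2id : M2 := mkM2 Cone Czero Czero Cone.
Definition M2sub (A B : M2) : M2 :=
  mkM2 (Csub (m11 A) (m11 B)) (Csub (m12 A) (m12 B))
       (Csub (m21 A) (m21 B)) (Csub (m22 A) (m22 B)).
Definition M2det (A : M2) : Cx := Csub (Cmul (m11 A) (m22 A)) (Cmul (m12 A) (m21 A)).
Definition M2tr (A : M2) : Cx := Cadd (m11 A) (m22 A).

Definition vnorm (v : V2) : R := sqrt (Cnorm2 (fst v) + Cnorm2 (snd v)).

(** r is an upper bound for the operator norm: ||A|| <= r  (the infimum
    defining the operator norm is attained, so ||A|| <= r iff this holds). *)
Definition opnorm_le (A : M2) (r : R) : Prop :=
  0 <= r /\ forall v : V2, vnorm (M2apply A v) <= r * vnorm v.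
Definition opnorm_lt (A : M2) (r : R) : Prop :=
  exists r', r' < r /\ opnorm_le A r'.

Definition piA (A : M2) : Cx * Cx * Cx := (m21 A, M2tr A, M2det A).

Definition in_E (X : M2) : Prop := m21 X = Czero /\ m11 X = m22 X.

(** the set whose infimum of norms is 1/mu_E(A) *)
Definition mu_set (A : M2) (X : M2) : Prop :=
  in_E X /\ M2det (M2sub M2id (M2mul A X)) = Czero.

(** mu_E(A) <= 1  <->  1/mu_E(A) = inf { ||X|| : X in mu_set A } >= 1
    (inf of the empty set is +infinity, i.e. mu_E(A) = 0). *)
Definition muE_le1 (A : M2) : Prop :=
  forall X, mu_set A X -> ~ opnorm_lt X 1.
(** mu_E(A) < 1  <->  inf { ||X|| : X in mu_set A } > 1 *)
Definition muE_lt1 (A : M2) : Prop :=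
  exists r, 1 < r /\ forall X, mu_set A X -> ~ opnorm_lt X r.

Definition in_P (q : Cx * Cx * Cx) : Prop :=
  exists A, opnorm_lt A 1 /\ piA A = q.
Definition in_Pmu (q : Cx * Cx * Cx) : Prop :=
  exists A, muE_lt1 A /\ piA A = q.

Definition in_closure (S : Cx * Cx * Cx -> Prop) (q : Cx * Cx * Cx) : Prop :=
  forall eps, 0 < eps -> exists q', S q' /\
    Cmod (Csub (fst (fst q')) (fst (fst q))) < eps /\
    Cmod (Csub (snd (fst q')) (snd (fst q))) < eps /\
    Cmod (Csub (snd q') (snd q)) < eps.

Definition Psi (z a s p : Cx) : Cx :=
  Cdiv (Cmul a (RtoC (1 - Cnorm2 z)))
       (Cadd (Csub Cone (Cmul s z)) (Cmul p (Cmul z z))).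

(* Main.v *)
Require Import Defs.
From Stdlib Require Import Reals Lra Nsatz Classical.
Open Scope R_scope.

Ltac unf := unfold Cdiv, Cinv, Csub in *; unfold Cadd, Copp, Cmul, Cconj, Cnorm2, RtoC, Cone, Czero in *; simpl in *.

Lemma Cnorm2_nonneg z : 0 <= Cnorm2 z.
Proof. destruct z as [x y]; unf; nra. Qed.

Lemma Cmod_nonneg z : 0 <= Cmod z.
Proof. apply sqrt_pos. Qed.

Lemma Cmod_sq z : Cmod z * Cmod z = Cnorm2 z.
Proof. apply sqrt_sqrt, Cnorm2_nonneg. Qed.

Lemma Cnorm2_mul z w : Cnorm2 (Cmul z w) = Cnorm2 z * Cnorm2 w.
Proof. destruct z, w; unf; ring. Qed.

Lemma Cmod_mul z w : Cmod (Cmul z w) = Cmod z * Cmod w.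
Proof. unfold Cmod; rewrite Cnorm2_mul; apply sqrt_mult; apply Cnorm2_nonneg. Qed.

Lemma sq_le_iff a b : 0 <= a -> 0 <= b -> (a <= b <-> a * a <= b * b).
Proof. intros; split; intros; nra. Qed.

Lemma sq_lt_iff a b : 0 <= a -> 0 <= b -> (a < b <-> a * a < b * b).
Proof. intros; split; intros; nra. Qed.

Lemma Cmod_le_sq z x : 0 <= x -> (Cmod z <= x <-> Cnorm2 z <= x * x).
Proof. intros; rewrite <- Cmod_sq; apply sq_le_iff; auto using Cmod_nonneg. Qed.

Lemma Cmod_ge_sq z x : 0 <= x -> (x <= Cmod z <-> x * x <= Cnorm2 z).
Proof. intros; rewrite <- Cmod_sq; apply sq_le_iff; auto using Cmod_nonneg. Qed.

Lemma sqrt_eq_of_sq x y : 0 <= y -> y * y = x -> sqrt x = y.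
Proof. intros H1 H2; subst; apply sqrt_square; auto. Qed.

Lemma Cmod_eq_sq z x : 0 <= x -> Cnorm2 z = x * x -> Cmod z = x.
Proof. intros; unfold Cmod; apply sqrt_eq_of_sq; auto. Qed.

Lemma CS_ineq z w : fst z * fst w + snd z * snd w <= Cmod z * Cmod w.
Proof.
  pose proof (Cmod_sq z); pose proof (Cmod_sq w).
  pose proof (Cmod_nonneg z); pose proof (Cmod_nonneg w).
  destruct (Rle_dec (fst z * fst w + snd z * snd w) 0). nra.
  apply sq_le_iff; try nra.
  destruct z as [z1 z2], w as [w1 w2]; unf; simpl in *.
  replace (Cmod (z1,z2) * Cmod (w1,w2) * (Cmod (z1,z2) * Cmod (w1,w2)))
   with ((Cmod (z1,z2) * Cmod (z1,z2)) * (Cmod (w1,w2) * Cmod (w1,w2))) by ring.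
  rewrite H, H0. pose proof (Rle_0_sqr (z1*w2 - z2*w1)); unfold Rsqr in *; nra.
Qed.

Lemma Cmod_triangle z w : Cmod (Cadd z w) <= Cmod z + Cmod w.
Proof.
  apply Cmod_le_sq. pose proof (Cmod_nonneg z); pose proof (Cmod_nonneg w); lra.
  pose proof (Cmod_sq z); pose proof (Cmod_sq w).
  pose proof (CS_ineq z w).
  destruct z as [z1 z2], w as [w1 w2]; unf; simpl in *. nra.
Qed.

Lemma Cmod_0 : Cmod Czero = 0.
Proof. unfold Cmod, Cnorm2, Czero; simpl. replace (0*0+0*0) with 0 by ring. apply sqrt_0. Qed.

Definition Nv (v : V2) := Cnorm2 (fst v) + Cnorm2 (snd v).
Lemma Nv_nonneg v : 0 <= Nv v.
Proof. unfold Nv; pose proof (Cnorm2_nonneg (fst v)); pose proof (Cnorm2_nonneg (snd v)); lra. Qed.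
Lemma vnorm_sq v : vnorm v * vnorm v = Nv v.
Proof. apply sqrt_sqrt, Nv_nonneg. Qed.
Lemma vnorm_nonneg v : 0 <= vnorm v.
Proof. apply sqrt_pos. Qed.

Lemma opnorm_sq A r : opnorm_le A r -> forall v, Nv (M2apply A v) <= r * r * Nv v.
Proof.
  intros [Hr H] v. specialize (H v).
  rewrite <- !vnorm_sq. pose proof (vnorm_nonneg (M2apply A v)).
  pose proof (vnorm_nonneg v). nra.
Qed.

Lemma opnorm_of_sq A r : 0 <= r -> (forall v, Nv (M2apply A v) <= r * r * Nv v) -> opnorm_le A r.
Proof.
  intros Hr H; split; auto; intro v. specialize (H v).
  rewrite <- !vnorm_sq in H. pose proof (vnorm_nonneg (M2apply A v)).
  pose proof (vnorm_nonneg v). apply sq_le_iff; nra.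
Qed.

Lemma M2apply_mul A B v : M2apply (M2mul A B) v = M2apply A (M2apply B v).
Proof.
  destruct A as [[a1 a2] [b1 b2] [c1 c2] [d1 d2]], B as [[e1 e2] [f1 f2] [g1 g2] [h1 h2]],
    v as [[x1 x2] [y1 y2]]; unfold M2apply, M2mul; unf; f_equal; f_equal; ring.
Qed.

Lemma Cx_eq_dec (z w : Cx) : z = w \/ z <> w.
Proof. apply classic. Qed.

Lemma kernel_vec (M : M2) : M2det M = Czero ->
  exists v, (fst v <> Czero \/ snd v <> Czero) /\ M2apply M v = (Czero, Czero).
Proof.
  destruct M as [m11 m12 m21 m22]; unfold M2det, M2apply; simpl; intro Hd.
  destruct (classic (m11 <> Czero \/ m12 <> Czero)) as [H|H].
  - exists (Copp m12, m11). split. simpl. destruct H as [H|H]; [right; exact H|left].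
    intro E; apply H; destruct m12; unf; injection E; intros; f_equal; lra.
    destruct m11, m12, m21, m22; unf. injection Hd; intros.
    f_equal; f_equal; nra.
  - assert (m11 = Czero /\ m12 = Czero) as [-> ->] by (split; apply NNPP; tauto).
    destruct (classic (m21 <> Czero \/ m22 <> Czero)) as [H'|H'].
    + exists (m22, Copp m21). split. simpl. destruct H' as [H'|H']; [right|left; exact H'].
      intro E; apply H'; destruct m21; unf; injection E; intros; f_equal; lra.
      destruct m21, m22; unf. injection Hd; intros. f_equal; f_equal; nra.
    + assert (m21 = Czero /\ m22 = Czero) as [-> ->] by (split; apply NNPP; tauto).
      exists (Cone, Czero). split. left; unf; intro E; injection E; lra.
      unf; f_equal; f_equal; ring.
Qed.

Lemma Nv_pos v : (fst v <> Czero \/ snd v <> Czero) -> 0 < Nv v.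
Proof.
  destruct v as [[x1 x2] [y1 y2]]; unfold Nv; unf; intros H.
  destruct (Req_dec x1 0), (Req_dec x2 0), (Req_dec y1 0), (Req_dec y2 0); subst;
   try nra. destruct H as [H|H]; exfalso; apply H; reflexivity.
Qed.

Lemma opnorm_le_mono A r r' : opnorm_le A r -> r <= r' -> opnorm_le A r'.
Proof.
  intros [Hr H] Hrr; split; [lra|]; intro v; specialize (H v).
  pose proof (vnorm_nonneg v); nra.
Qed.

Lemma P1 A : opnorm_le A 1 -> muE_le1 A.
Proof.
  intros HA X [_ Hdet] [r [Hr HX]].
  destruct (kernel_vec _ Hdet) as [v [Hv Hm]].
  pose proof (opnorm_sq _ _ HA (M2apply X v)) as H1.
  pose proof (opnorm_sq _ _ HX v) as H2.
  assert (E : M2apply A (M2apply X v) = v).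
  { rewrite <- M2apply_mul. revert Hm. generalize (M2mul A X) as B. intros B.
    destruct B as [[a1 a2] [b1 b2] [c1 c2] [d1 d2]], v as [[x1 x2] [y1 y2]];
      unfold M2apply, M2sub, M2id; unf; intro Hm. injection Hm; intros.
    f_equal; f_equal; lra. }
  rewrite E in H1. pose proof (Nv_pos _ Hv). destruct HX as [Hr0 _].
  assert (r * r < 1) by nra. nra.
Qed.

Definition dpoly (s p z : Cx) : Cx := Cadd (Csub Cone (Cmul s z)) (Cmul p (Cmul z z)).
Definition S5p (a s p : Cx) : Prop :=
  forall z, in_open_disc z -> Cmod a * (1 - Cnorm2 z) <= Cmod (dpoly s p z).

Lemma Cnorm2_pos z : z <> Czero -> 0 < Cnorm2 z.
Proof.
  destruct z as [x y]; unf; intro H.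
  destruct (Req_dec x 0), (Req_dec y 0); subst; try nra. exfalso; apply H; reflexivity.
Qed.

Lemma Cmul_div d a : a <> Czero -> Cmul a (Cdiv d a) = d.
Proof.
  intro H; pose proof (Cnorm2_pos _ H). destruct a as [a1 a2], d as [d1 d2]; unf.
  f_equal; field; lra.
Qed.

Lemma open_disc_sq z : in_open_disc z -> Cnorm2 z < 1.
Proof.
  unfold in_open_disc; intro H. rewrite <- Cmod_sq. pose proof (Cmod_nonneg z); nra.
Qed.

Lemma Xnorm_real m rho r X Y : 0 <= m -> 0 <= rho -> m <= r -> r * r = m * r + rho * rho ->
  0 <= X -> 0 <= Y -> (rho * X + m * Y) * (rho * X + m * Y) + rho * rho * (Y * Y) <= r * r * (X * X + Y * Y).
Proof.
  intros Hm Hrho Hmr Hr HX HY.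
  destruct (Req_dec r 0). { subst. assert (m = 0) by lra. assert (rho*rho = 0) by nra. subst; nra. }
  assert (0 < r) by lra.
  assert (E : r * (r * r * (X * X + Y * Y) - ((rho * X + m * Y) * (rho * X + m * Y) + rho * rho * (Y * Y)))
     - m * ((r * X - rho * Y) * (r * X - rho * Y)) = (r*r - m*r - rho*rho)*(r*X*X + (r+m)*Y*Y)) by ring.
  replace (r*r - m*r - rho*rho) with 0 in E by lra.
  assert (0 <= m * ((r * X - rho * Y) * (r * X - rho * Y))) by (apply Rmult_le_pos; [lra | pose proof (Rle_0_sqr (r*X - rho*Y)); unfold Rsqr in *; lra]).
  rewrite Rmult_0_l in E. apply Rmult_le_reg_l with r; [lra|]. nra.
Qed.

Lemma sqrt_lt_of x y : 0 <= x -> 0 < y -> x < y * y -> sqrt x < y.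
Proof. intros. rewrite <- (sqrt_square y) by lra. apply sqrt_lt_1_alt; lra. Qed.

Lemma Xmat_norm z w : Cmod w < 1 - Cnorm2 z -> opnorm_lt (mkM2 z w Czero z) 1.
Proof.
  intro Hw.
  assert (Hm : 0 <= Cmod w) by apply Cmod_nonneg. assert (Hrho: 0 <= Cmod z) by apply Cmod_nonneg.
  assert (Hz2 : Cmod z * Cmod z = Cnorm2 z) by apply Cmod_sq.
  pose proof (sqrt_pos (Cmod w * Cmod w + 4 * (Cmod z * Cmod z))) as HS0.
  pose proof (sqrt_sqrt (Cmod w * Cmod w + 4 * (Cmod z * Cmod z)) ltac:(nra)) as HS.
  revert HS0 HS. generalize (sqrt (Cmod w * Cmod w + 4 * (Cmod z * Cmod z))) as S. intros S HS0 HS.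
  exists ((Cmod w + S) / 2). split.
  { rewrite <- Hz2 in Hw. assert (S < 2 - Cmod w).
    { rewrite <- (sqrt_square S) by lra. rewrite HS. apply sqrt_lt_of; nra. } lra. }
  apply opnorm_of_sq. lra.
  intros [v1 v2]. unfold M2apply, Nv; simpl.
  assert (E1 : Cadd (Cmul Czero v1) (Cmul z v2) = Cmul z v2) by (destruct z, v1, v2; unf; f_equal; ring).
  rewrite E1.
  pose proof (Cmod_triangle (Cmul z v1) (Cmul w v2)) as T. rewrite !Cmod_mul in T.
  rewrite <- !Cmod_sq. rewrite !Cmod_mul.
  pose proof (Cmod_nonneg v1); pose proof (Cmod_nonneg v2).
  pose proof (Cmod_nonneg (Cadd (Cmul z v1) (Cmul w v2))).
  pose proof (Xnorm_real (Cmod w) (Cmod z) ((Cmod w+S)/2) (Cmod v1) (Cmod v2) Hm Hrho ltac:(nra) ltac:(nra) H H0).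
  nra.
Qed.

Lemma det_IAX A z w :
  M2det (M2sub M2id (M2mul A (mkM2 z w Czero z))) =
  Csub (dpoly (M2tr A) (M2det A) z) (Cmul (m21 A) w).
Proof.
  destruct A as [[a1 a2] [b1 b2] [c1 c2] [d1 d2]], z as [z1 z2], w as [w1 w2].
  unfold M2det, M2sub, M2id, M2mul, M2tr, dpoly; simpl; unf; f_equal; ring.
Qed.

Lemma P2 A a s p : muE_le1 A -> piA A = (a, s, p) -> S5p a s p.
Proof.
  intros HA Hpi z Hz. unfold piA in Hpi. injection Hpi as Ha Hs Hp.
  apply Rnot_lt_le; intro Hlt.
  pose proof (open_disc_sq _ Hz).
  assert (Ha0 : a <> Czero).
  { intro E; subst a. rewrite E, Cmod_0 in Hlt.
    pose proof (Cmod_nonneg (dpoly s p z)); nra. }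
  set (w := Cdiv (dpoly s p z) a).
  assert (Hw : Cmul a w = dpoly s p z) by (apply Cmul_div; auto).
  apply (HA (mkM2 z w Czero z)).
  - split. split; reflexivity. rewrite det_IAX, Ha, Hs, Hp, Hw.
    destruct (dpoly s p z); unf; f_equal; ring.
  - apply Xmat_norm. pose proof (Cmod_mul a w) as E. rewrite Hw in E.
    pose proof (Cnorm2_pos _ Ha0). rewrite <- Cmod_sq in H0.
    pose proof (Cmod_nonneg a). pose proof (Cmod_nonneg w).
    assert (0 < Cmod a) by nra. nra.
Qed.

Definition scaleM (r : R) (A : M2) : M2 :=
  mkM2 (Cmul (RtoC r) (m11 A)) (Cmul (RtoC r) (m12 A)) (Cmul (RtoC r) (m21 A)) (Cmul (RtoC r) (m22 A)).

Lemma Cnorm2_scale r z : Cnorm2 (Cmul (RtoC r) z) = r * r * Cnorm2 z.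
Proof. destruct z; unf; ring. Qed.

Lemma opnorm_scale A r t : 0 <= r -> opnorm_le A t -> opnorm_le (scaleM r A) (r * t).
Proof.
  intros Hr HA. pose proof (opnorm_sq _ _ HA) as H. destruct HA as [Ht _].
  apply opnorm_of_sq. nra. intro v. specialize (H v).
  assert (Nv (M2apply (scaleM r A) v) = r * r * Nv (M2apply A v)).
  { destruct A as [[a1 a2] [b1 b2] [c1 c2] [d1 d2]], v as [[x1 x2] [y1 y2]];
      unfold Nv, M2apply, scaleM; simpl; unf; ring. }
  rewrite H0. assert (0 <= r * r) by nra. nra.
Qed.

Lemma piA_scale r A : piA (scaleM r A) =
  (Cmul (RtoC r) (m21 A), Cmul (RtoC r) (M2tr A), Cmul (RtoC (r * r)) (M2det A)).
Proof.
  destruct A as [[a1 a2] [b1 b2] [c1 c2] [d1 d2]]; unfold piA, scaleM, M2tr, M2det; simpl; unf.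
  f_equal; [f_equal|]; f_equal; ring.
Qed.

Lemma Cmod_scale_sub r z : 0 <= r <= 1 -> Cmod (Csub (Cmul (RtoC r) z) z) = (1 - r) * Cmod z.
Proof.
  intro H. apply Cmod_eq_sq. pose proof (Cmod_nonneg z); nra.
  replace ((1 - r) * Cmod z * ((1 - r) * Cmod z)) with ((1-r)*(1-r)*(Cmod z * Cmod z)) by ring.
  rewrite Cmod_sq. destruct z; unf; ring.
Qed.

Lemma scale_choice (a s p : Cx) eps : 0 < eps -> exists r, 0 < r < 1 /\
  (1 - r) * Cmod a < eps /\ (1 - r) * Cmod s < eps /\ (1 - r * r) * Cmod p < eps.
Proof.
  intro He. pose proof (Cmod_nonneg a); pose proof (Cmod_nonneg s); pose proof (Cmod_nonneg p).
  set (M := 1 + Cmod a + Cmod s + Cmod p).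
  set (d := Rmin (1/2) (eps / (2 * M))).
  assert (HM : 1 <= M) by (unfold M; lra).
  assert (Hd1 : d <= 1/2) by apply Rmin_l.
  assert (Hd2 : d <= eps / (2 * M)) by apply Rmin_r.
  assert (Hd0 : 0 < d). { unfold d; apply Rmin_glb_lt. lra. apply Rdiv_lt_0_compat; lra. }
  assert (Hd3 : d * (2 * M) <= eps).
  { apply Rmult_le_compat_r with (r := 2 * M) in Hd2; [|lra].
    unfold Rdiv in Hd2; rewrite Rmult_assoc, Rinv_l in Hd2 by lra. lra. }
  exists (1 - d). repeat split; try lra.
  - unfold M in Hd3; nra.
  - unfold M in Hd3; nra.
  - unfold M in Hd3; nra.
Qed.

Lemma P6a A : opnorm_le A 1 -> in_closure in_P (piA A).
Proof.
  intros HA eps He.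
  destruct (scale_choice (m21 A) (M2tr A) (M2det A) eps He) as [r [Hr [H1 [H2 H3]]]].
  exists (piA (scaleM r A)). split.
  - exists (scaleM r A). split; auto. exists (r * 1). split. lra. apply opnorm_scale; auto; lra.
  - rewrite piA_scale; unfold piA; cbn [fst snd]. rewrite !Cmod_scale_sub by nra. lra.
Qed.

Lemma mul_scale A X r : M2mul (scaleM r A) X = M2mul A (scaleM r X).
Proof.
  destruct A as [[a1 a2] [b1 b2] [c1 c2] [d1 d2]], X as [[e1 e2] [f1 f2] [g1 g2] [h1 h2]].
  unfold M2mul, scaleM; simpl; unf; f_equal; f_equal; ring.
Qed.

Lemma P6b A : opnorm_le A 1 -> in_closure in_Pmu (piA A).
Proof.
  intros HA eps He.
  destruct (scale_choice (m21 A) (M2tr A) (M2det A) eps He) as [r [Hr [H1 [H2 H3]]]].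
  exists (piA (scaleM r A)). split.
  - exists (scaleM r A). split; auto. exists (/ r). split.
    { rewrite <- Rinv_1. apply Rinv_lt_contravar; lra. }
    intros X [HE Hd] [r'' [Hr'' HX]].
    apply (P1 A HA (scaleM r X)).
    + split. destruct HE as [HE1 HE2]; unfold in_E, scaleM; simpl; rewrite HE1, HE2; split; auto.
      unf; f_equal; ring.
      rewrite <- mul_scale; auto.
    + exists (r * r''). split.
      { apply Rmult_lt_compat_l with (r := r) in Hr''; [|lra].
        rewrite Rinv_r in Hr'' by lra. lra. }
      apply opnorm_scale; auto; lra.
  - rewrite piA_scale; unfold piA; cbn [fst snd]. rewrite !Cmod_scale_sub by nra. lra.
Qed.

Lemma Cmod_opp z : Cmod (Copp z) = Cmod z.
Proof. unfold Cmod; f_equal; destruct z; unf; ring. Qed.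

Lemma Cmod_sub_sym z w : Cmod (Csub z w) = Cmod (Csub w z).
Proof. unfold Cmod; f_equal; destruct z, w; unf; ring. Qed.

Lemma Cmod_le_sub z w : Cmod z <= Cmod w + Cmod (Csub z w).
Proof.
  replace z with (Cadd w (Csub z w)) at 1 by (destruct z, w; unf; f_equal; ring).
  apply Cmod_triangle.
Qed.

Lemma Cmod_lt1_sq_le z : Cmod z < 1 -> Cmod z * Cmod z <= Cmod z.
Proof. pose proof (Cmod_nonneg z); nra. Qed.

Lemma dpoly_diff s p s' p' z : Cmod z < 1 ->
  Cmod (Csub (dpoly s' p' z) (dpoly s p z)) <= Cmod (Csub s' s) + Cmod (Csub p' p).
Proof.
  intro Hz.
  replace (Csub (dpoly s' p' z) (dpoly s p z)) with
     (Cadd (Copp (Cmul (Csub s' s) z)) (Cmul (Csub p' p) (Cmul z z)))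
    by (unfold dpoly; destruct s, p, s', p', z; unf; f_equal; ring).
  eapply Rle_trans. apply Cmod_triangle. rewrite Cmod_opp, !Cmod_mul.
  pose proof (Cmod_nonneg z); pose proof (Cmod_nonneg (Csub s' s)); pose proof (Cmod_nonneg (Csub p' p)).
  assert (Cmod z * Cmod z <= 1) by nra.
  assert (Cmod (Csub s' s) * Cmod z <= Cmod (Csub s' s)) by nra.
  assert (Cmod (Csub p' p) * (Cmod z * Cmod z) <= Cmod (Csub p' p)) by nra.
  lra.
Qed.

Lemma S5p_limit a s p :
  (forall eps, 0 < eps -> exists a' s' p', S5p a' s' p' /\
     Cmod (Csub a' a) < eps /\ Cmod (Csub s' s) < eps /\ Cmod (Csub p' p) < eps) ->
  S5p a s p.
Proof.
  intros H z Hz. pose proof (open_disc_sq _ Hz) as Hz2. pose proof (Cnorm2_nonneg z).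
  apply Rnot_lt_le; intro Hlt.
  set (g := Cmod a * (1 - Cnorm2 z) - Cmod (dpoly s p z)).
  destruct (H (g / 4)) as [a' [s' [p' [H5 [Ha [Hs Hp]]]]]]. unfold g; lra.
  specialize (H5 z Hz).
  pose proof (Cmod_le_sub a a') as Q1. rewrite Cmod_sub_sym in Q1.
  pose proof (Cmod_le_sub (dpoly s' p' z) (dpoly s p z)).
  pose proof (dpoly_diff s p s' p' z Hz).
  assert (Cmod a * (1 - Cnorm2 z) <= Cmod a' * (1 - Cnorm2 z) + g/4) by nra.
  unfold g in *. lra.
Qed.

Lemma P7a a s p : in_closure in_P (a, s, p) -> S5p a s p.
Proof.
  intro H. apply S5p_limit. intros eps He. destruct (H eps He) as [[[a' s'] p'] [[A [HA Hpi]] Hc]].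
  exists a', s', p'. split; [|exact Hc].
  apply (P2 A). apply P1. destruct HA as [r [Hr HA]]. eapply opnorm_le_mono; eauto; lra. exact Hpi.
Qed.

Lemma P7b a s p : in_closure in_Pmu (a, s, p) -> S5p a s p.
Proof.
  intro H. apply S5p_limit. intros eps He. destruct (H eps He) as [[[a' s'] p'] [[A [HA Hpi]] Hc]].
  exists a', s', p'. split; [|exact Hc].
  apply (P2 A); [|exact Hpi].
  destruct HA as [r [Hr HA]]. intros X HX [r' [Hr' HX']]. apply (HA X HX). exists r'; split; auto; lra.
Qed.

Lemma dpoly_factor l1 l2 z : dpoly (Cadd l1 l2) (Cmul l1 l2) z = Cmul (Csub Cone (Cmul l1 z)) (Csub Cone (Cmul l2 z)).
Proof. unfold dpoly; destruct l1, l2, z; unf; f_equal; ring. Qed.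

Lemma Cmod_Csub_one_pos l z : Cmod l <= 1 -> Cmod z < 1 -> 0 < Cmod (Csub Cone (Cmul l z)).
Proof.
  intros Hl Hz. pose proof (Cmod_le_sub Cone (Cmul l z)) as H.
  replace (Cmod Cone) with 1 in H by (symmetry; apply Cmod_eq_sq; [lra| unf; ring]).
  rewrite Cmod_mul in H. pose proof (Cmod_nonneg l); pose proof (Cmod_nonneg z). nra.
Qed.

Lemma div_le1 x y : 0 < y -> (x / y <= 1 <-> x <= y).
Proof.
  intro Hy. assert (E : x / y * y = x) by (field; lra). split; intro H.
  - rewrite <- E. nra.
  - apply Rnot_lt_le; intro H'. nra.
Qed.

Lemma Cmod_div x d : d <> Czero -> Cmod (Cdiv x d) = Cmod x / Cmod d.
Proof.
  intro H. pose proof (Cnorm2_pos _ H). rewrite <- Cmod_sq in H0.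
  pose proof (Cmod_nonneg d). assert (0 < Cmod d) by nra.
  apply Cmod_eq_sq. unfold Rdiv; apply Rmult_le_pos; [apply Cmod_nonneg| left; apply Rinv_0_lt_compat; auto].
  replace (Cmod x / Cmod d * (Cmod x / Cmod d)) with (Cmod x * Cmod x / (Cmod d * Cmod d)) by (field; lra).
  rewrite !Cmod_sq. pose proof (Cnorm2_pos _ H) as Hp.
  destruct x as [x1 x2], d as [d1 d2]; unf. field. lra.
Qed.

Lemma Cmod_RtoC_mul a t : 0 <= t -> Cmod (Cmul a (RtoC t)) = Cmod a * t.
Proof.
  intro Ht. rewrite Cmod_mul. f_equal. apply Cmod_eq_sq; auto. unf; ring.
Qed.

Lemma P8 l1 l2 a : in_closed_disc l1 -> in_closed_disc l2 ->
  (S5p a (Cadd l1 l2) (Cmul l1 l2) <->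
   forall z, in_open_disc z -> Cmod (Psi z a (Cadd l1 l2) (Cmul l1 l2)) <= 1).
Proof.
  intros H1 H2. unfold S5p, Psi.
  assert (Hd : forall z, in_open_disc z -> 0 < Cmod (dpoly (Cadd l1 l2) (Cmul l1 l2) z)).
  { intros z Hz. rewrite dpoly_factor, Cmod_mul.
    apply Rmult_lt_0_compat; apply Cmod_Csub_one_pos; auto. }
  split; intros H z Hz; specialize (H z Hz); specialize (Hd z Hz);
    pose proof (open_disc_sq _ Hz);
    assert (Hne : dpoly (Cadd l1 l2) (Cmul l1 l2) z <> Czero)
      by (intro E; rewrite E, Cmod_0 in Hd; lra);
    fold (dpoly (Cadd l1 l2) (Cmul l1 l2) z) in *;
    rewrite Cmod_div in * by exact Hne; rewrite Cmod_RtoC_mul in * by lra.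
  - apply div_le1; lra.
  - apply div_le1; [lra|exact H].
Qed.

Definition Kb (l1 l2 : Cx) : R := (1/2) * Cmod (Csub Cone (Cmul (Cconj l2) l1))
              + (1/2) * sqrt (1 - Cnorm2 l1) * sqrt (1 - Cnorm2 l2).

Lemma Cmul_div_r X q : q <> Czero -> Cmul (Cdiv X q) q = X.
Proof.
  intro H; pose proof (Cnorm2_pos _ H). destruct q as [a1 a2], X as [d1 d2]; unf.
  f_equal; field; lra.
Qed.

Lemma mob_i l X q : q <> Czero -> Cmul (Csub Cone (Cmul l (Cdiv X q))) q = Csub q (Cmul l X).
Proof.
  intro H. pose proof (Cmul_div_r X q H) as E.
  transitivity (Csub q (Cmul l (Cmul (Cdiv X q) q))).
  - generalize (Cdiv X q) as u. intro u. destruct l, u, q; unf; f_equal; ring.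
  - rewrite E; reflexivity.
Qed.

Lemma Cnorm2_div_mul X q : q <> Czero -> Cnorm2 (Cdiv X q) * Cnorm2 q = Cnorm2 X.
Proof. intro H. rewrite <- Cnorm2_mul, Cmul_div_r; auto. Qed.

Lemma Cnorm2_conj z : Cnorm2 (Cconj z) = Cnorm2 z.
Proof. destruct z; unf; ring. Qed.

Lemma Cnorm2_RtoC t : Cnorm2 (RtoC t) = t * t.
Proof. unf; ring. Qed.

Lemma Cmod_RtoC t : 0 <= t -> Cmod (RtoC t) = t.
Proof. intro; apply Cmod_eq_sq; auto; unf; ring. Qed.

Lemma Cnorm2_lt1 z : Cmod z < 1 -> Cnorm2 z < 1.
Proof. intro H; rewrite <- Cmod_sq; pose proof (Cmod_nonneg z); nra. Qed.

Lemma Cnorm2_le1 z : Cmod z <= 1 -> Cnorm2 z <= 1.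
Proof. intro H; rewrite <- Cmod_sq; pose proof (Cmod_nonneg z); nra. Qed.

Lemma lt1_Cmod z : Cnorm2 z < 1 -> Cmod z < 1.
Proof. intro H; rewrite <- Cmod_sq in H; pose proof (Cmod_nonneg z); nra. Qed.

Lemma P3int l1 l2 a : Cmod l1 < 1 -> Cmod l2 < 1 ->
  (forall z, in_open_disc z -> Cmod a * (1 - Cnorm2 z) <=
       Cmod (Csub Cone (Cmul l1 z)) * Cmod (Csub Cone (Cmul l2 z))) ->
  Cmod a <= Kb l1 l2.
Proof.
  intros Hl1 Hl2 H.
  apply Cnorm2_lt1 in Hl1. apply Cnorm2_lt1 in Hl2.
  pose proof (Cnorm2_nonneg l1). pose proof (Cnorm2_nonneg l2).
  set (A1 := 1 - Cnorm2 l1). set (A2 := 1 - Cnorm2 l2).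
  assert (HA1 : 0 < A1) by (unfold A1; lra). assert (HA2 : 0 < A2) by (unfold A2; lra).
  set (c := Csub Cone (Cmul l2 (Cconj l1))).
  assert (HcN : Cnorm2 c = Cnorm2 (Csub l2 l1) + A1 * A2)
    by (unfold c, A1, A2; destruct l1, l2; unf; ring).
  set (R := sqrt A1 * sqrt A2).
  assert (HR2 : R * R = A1 * A2).
  { unfold R. replace (sqrt A1 * sqrt A2 * (sqrt A1 * sqrt A2)) with ((sqrt A1 * sqrt A1) * (sqrt A2 * sqrt A2)) by ring.
    rewrite !sqrt_sqrt; lra. }
  assert (HR : 0 < R) by (unfold R; apply Rmult_lt_0_compat; apply sqrt_lt_R0; lra).
  set (N := Cmod c).
  assert (HN2 : N * N = Cnorm2 c) by apply Cmod_sq.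
  assert (HN0 : 0 <= N) by apply Cmod_nonneg.
  pose proof (Cnorm2_nonneg (Csub l2 l1)).
  assert (HN : 0 < N) by nra.
  assert (HRN : R <= N) by nra.
  assert (Hc0 : c <> Czero) by (intro E; unfold N in HN; rewrite E, Cmod_0 in HN; lra).
  set (sg := R / N).
  assert (Hsg : R = N * sg) by (unfold sg; field; lra).
  assert (Hsg0 : 0 < sg) by (unfold sg; apply Rdiv_lt_0_compat; lra).
  assert (Hsg1 : sg <= 1) by (unfold sg; apply div_le1; lra).
  set (nu := Cdiv (Csub l2 l1) c).
  assert (Hnu : Cmul nu c = Csub l2 l1) by (apply Cmul_div_r; auto).
  assert (Hnu2 : Cnorm2 nu = 1 - sg * sg).
  { assert (Cnorm2 nu * (N * N) = N * N - R * R).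
    { rewrite HN2, <- Cnorm2_mul, Hnu. lra. }
    rewrite Hsg in H3. apply Rmult_eq_reg_r with (N * N). rewrite H3. ring. nra. }
  set (t := 1 / (1 + sg)).
  assert (Ht : t * (1 + sg) = 1) by (unfold t; field; lra).
  assert (Ht0 : 0 < t) by (unfold t; apply Rdiv_lt_0_compat; lra).
  set (zeta := Cmul (Cconj nu) (RtoC t)).
  assert (Hzeta2 : Cnorm2 zeta = (1 - sg * sg) * (t * t))
    by (unfold zeta; rewrite Cnorm2_mul, Cnorm2_conj, Cnorm2_RtoC, Hnu2; ring).
  assert (Hzeta2' : 1 - Cnorm2 zeta = 2 * sg * t).
  { rewrite Hzeta2. assert (E: 1 - (1-sg*sg)*(t*t) - 2*sg*t = (1 - t*(1+sg))*(1 + t*(1-sg))) by ring.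
    rewrite Ht in E. lra. }
  assert (Hone : Csub Cone (Cmul nu zeta) = RtoC sg).
  { unfold zeta. replace (Csub Cone (Cmul nu (Cmul (Cconj nu) (RtoC t)))) with (RtoC (1 - Cnorm2 nu * t))
      by (destruct nu; unf; f_equal; ring).
    rewrite Hnu2. f_equal. replace ((1 - sg*sg) * t) with ((1 - sg) * (t * (1 + sg))) by ring. rewrite Ht. ring. }
  set (q := Cadd Cone (Cmul l1 zeta)).
  assert (Hq : q <> Czero).
  { intro E. assert (E1 : Cmul l1 zeta = Copp Cone) by (unfold q in E; destruct (Cmul l1 zeta); unf; injection E; intros; f_equal; lra).
    assert (E2 : Cnorm2 (Cmul l1 zeta) = 1) by (rewrite E1; unf; ring).
    rewrite Cnorm2_mul in E2. pose proof (Cnorm2_nonneg zeta). nra. }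
  set (z0 := Cdiv (Cadd zeta (Cconj l1)) q).
  assert (L1 : Cmul (Csub Cone (Cmul l1 z0)) q = RtoC A1).
  { unfold z0; rewrite mob_i by auto. unfold q, A1; destruct l1, zeta; unf; f_equal; ring. }
  assert (L2 : Cmul (Csub Cone (Cmul l2 z0)) q = Cmul c (RtoC sg)).
  { unfold z0; rewrite mob_i by auto. rewrite <- Hone.
    transitivity (Csub c (Cmul (Cmul nu c) zeta)).
    - rewrite Hnu. unfold q, c; destruct l1, l2, zeta; unf; f_equal; ring.
    - destruct nu, c, zeta; unf; f_equal; ring. }
  assert (L3 : (1 - Cnorm2 z0) * Cnorm2 q = A1 * (1 - Cnorm2 zeta)).
  { unfold z0. replace ((1 - Cnorm2 (Cdiv (Cadd zeta (Cconj l1)) q)) * Cnorm2 q)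
      with (Cnorm2 q - Cnorm2 (Cdiv (Cadd zeta (Cconj l1)) q) * Cnorm2 q) by ring.
    rewrite Cnorm2_div_mul by auto. unfold q, A1; destruct l1, zeta; unf; ring. }
  pose proof (Cnorm2_pos _ Hq) as Hq2.
  assert (Hz0 : in_open_disc z0).
  { apply lt1_Cmod. rewrite Hzeta2' in L3. assert (HH : 0 < (1 - Cnorm2 z0) * Cnorm2 q) by (rewrite L3; apply Rmult_lt_0_compat; [lra|]; apply Rmult_lt_0_compat; lra).
    assert (0 < 1 - Cnorm2 z0). { apply Rmult_lt_reg_r with (r := Cnorm2 q). exact Hq2. rewrite Rmult_0_l. exact HH. }
    lra. }
  specialize (H z0 Hz0).
  apply (f_equal Cmod) in L1. apply (f_equal Cmod) in L2.
  rewrite Cmod_mul, Cmod_RtoC in L1 by lra. rewrite !Cmod_mul, Cmod_RtoC in L2 by lra.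
  fold N in L2.
  rewrite <- (Cmod_sq q) in L3, Hq2.
  pose proof (Cmod_nonneg q).
  pose proof (Cmod_nonneg a).
  assert (H6 : Cmod a * (A1 * (1 - Cnorm2 zeta)) <= A1 * (N * sg)).
  { rewrite <- L3, <- L1, <- L2.
    replace (Cmod a * ((1 - Cnorm2 z0) * (Cmod q * Cmod q))) with ((Cmod a * (1 - Cnorm2 z0)) * (Cmod q * Cmod q)) by ring.
    replace (Cmod (Csub Cone (Cmul l1 z0)) * Cmod q * (Cmod (Csub Cone (Cmul l2 z0)) * Cmod q))
      with ((Cmod (Csub Cone (Cmul l1 z0)) * Cmod (Csub Cone (Cmul l2 z0))) * (Cmod q * Cmod q)) by ring.
    apply Rmult_le_compat_r; nra. }
  rewrite Hzeta2' in H6.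
  assert (H7 : Cmod a * (2 * sg * t) <= N * sg).
  { apply Rmult_le_reg_l with A1; [lra|]. nra. }
  assert (H8 : Cmod a * 2 * (t * (1 + sg)) <= N * (1 + sg)).
  { apply Rmult_le_reg_l with sg; [lra|]. nra. }
  rewrite Ht in H8.
  unfold Kb. fold A1 A2. fold R.
  replace (Cmod (Csub Cone (Cmul (Cconj l2) l1))) with N.
  2:{ unfold N. unfold Cmod. f_equal. unfold c; destruct l1, l2; unf; ring. }
  replace (1 / 2 * sqrt A1 * sqrt A2) with (1/2 * R) by (unfold R; ring).
  rewrite Hsg. lra.
Qed.

Lemma Cmod_conj z : Cmod (Cconj z) = Cmod z.
Proof. unfold Cmod; rewrite Cnorm2_conj; auto. Qed.

Lemma sqrt_le1 x : x <= 1 -> sqrt x <= 1.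
Proof. intro; rewrite <- sqrt_1; apply sqrt_le_1_alt; lra. Qed.

Lemma sqrt_scale_bound x r e : 0 <= x <= 1 -> 0 <= e -> r * r = 1 - e * e ->
  sqrt (1 - r * r * x) <= sqrt (1 - x) + e.
Proof.
  intros Hx He Hr. pose proof (sqrt_pos (1 - x)).
  rewrite <- (sqrt_square (sqrt (1-x) + e)) by lra.
  apply sqrt_le_1_alt.
  replace ((sqrt (1 - x) + e) * (sqrt (1 - x) + e)) with (sqrt (1-x) * sqrt (1-x) + 2 * e * sqrt (1-x) + e * e) by ring.
  rewrite sqrt_sqrt by lra. rewrite Hr. nra.
Qed.

Lemma P3 l1 l2 a : in_closed_disc l1 -> in_closed_disc l2 ->
  S5p a (Cadd l1 l2) (Cmul l1 l2) -> Cmod a <= Kb l1 l2.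
Proof.
  intros H1 H2 H. apply Rnot_lt_le; intro Hlt.
  set (g := Cmod a - Kb l1 l2).
  set (e := Rmin (1/2) (g/4)).
  assert (He1 : e <= 1/2) by apply Rmin_l. assert (He2 : e <= g/4) by apply Rmin_r.
  assert (He0 : 0 < e) by (apply Rmin_glb_lt; unfold g; lra).
  set (r := sqrt (1 - e * e)).
  assert (Hr2 : r * r = 1 - e * e) by (apply sqrt_sqrt; nra).
  assert (Hr0 : 0 <= r) by apply sqrt_pos.
  assert (Hr1 : r < 1) by nra.
  unfold in_closed_disc in H1, H2.
  pose proof (Cmod_nonneg l1); pose proof (Cmod_nonneg l2).
  assert (Hint : Cmod a <= Kb (Cmul (RtoC r) l1) (Cmul (RtoC r) l2)).
  { apply P3int.
    - rewrite Cmod_mul, Cmod_RtoC by lra. nra.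
    - rewrite Cmod_mul, Cmod_RtoC by lra. nra.
    - intros z Hz. set (z' := Cmul (RtoC r) z).
      assert (Hz' : in_open_disc z').
      { unfold in_open_disc, z'. rewrite Cmod_mul, Cmod_RtoC by lra.
        unfold in_open_disc in Hz. pose proof (Cmod_nonneg z). nra. }
      specialize (H z' Hz'). rewrite dpoly_factor, Cmod_mul in H.
      replace (Cmul l1 z') with (Cmul (Cmul (RtoC r) l1) z) in H by (unfold z'; destruct l1, z; unf; f_equal; ring).
      replace (Cmul l2 z') with (Cmul (Cmul (RtoC r) l2) z) in H by (unfold z'; destruct l2, z; unf; f_equal; ring).
      assert (Cnorm2 z' <= Cnorm2 z).
      { unfold z'; rewrite Cnorm2_mul, Cnorm2_RtoC. pose proof (Cnorm2_nonneg z). nra. }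
      pose proof (Cmod_nonneg a). nra. }
  unfold Kb in Hint.
  rewrite !Cnorm2_mul, !Cnorm2_RtoC in Hint.
  replace (Csub Cone (Cmul (Cconj (Cmul (RtoC r) l2)) (Cmul (RtoC r) l1)))
    with (Cadd (Csub Cone (Cmul (Cconj l2) l1)) (Cmul (RtoC (1 - r * r)) (Cmul (Cconj l2) l1)))
    in Hint.
  2:{ destruct l1, l2; unf; f_equal; ring. }
  pose proof (Cmod_triangle (Csub Cone (Cmul (Cconj l2) l1)) (Cmul (RtoC (1 - r * r)) (Cmul (Cconj l2) l1))) as T.
  rewrite !Cmod_mul, Cmod_RtoC, Cmod_conj in T by nra.
  pose proof (Cnorm2_le1 _ H1). pose proof (Cnorm2_le1 _ H2).
  pose proof (Cnorm2_nonneg l1); pose proof (Cnorm2_nonneg l2).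
  pose proof (sqrt_scale_bound (Cnorm2 l1) r e ltac:(lra) ltac:(lra) Hr2) as S1.
  pose proof (sqrt_scale_bound (Cnorm2 l2) r e ltac:(lra) ltac:(lra) Hr2) as S2.
  pose proof (sqrt_le1 (1 - Cnorm2 l1) ltac:(lra)). pose proof (sqrt_le1 (1 - Cnorm2 l2) ltac:(lra)).
  pose proof (sqrt_pos (1 - Cnorm2 l1)). pose proof (sqrt_pos (1 - Cnorm2 l2)).
  pose proof (sqrt_pos (1 - r * r * Cnorm2 l1)). pose proof (sqrt_pos (1 - r * r * Cnorm2 l2)).
  set (A := sqrt (1 - Cnorm2 l1)) in *. set (B := sqrt (1 - Cnorm2 l2)) in *.
  set (A' := sqrt (1 - r * r * Cnorm2 l1)) in *. set (B' := sqrt (1 - r * r * Cnorm2 l2)) in *.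
  assert (A' * B' <= A * B + 3 * e) by nra.
  assert (Cmod l2 * Cmod l1 <= 1) by nra.
  assert ((1 - r * r) * (Cmod l2 * Cmod l1) <= e) by nra.
  unfold g, Kb in He2. fold A B in He2. lra.
Qed.

Lemma Tnorm_real a b c X Y : 0 <= a <= 1 -> 0 <= c <= 1 -> 0 <= b -> b * b <= (1 - a*a) * (1 - c*c) ->
  0 <= X -> 0 <= Y -> (a * X + b * Y) * (a * X + b * Y) + c * c * (Y * Y) <= 1 * 1 * (X * X + Y * Y).
Proof.
  intros Ha Hc Hb Hbb HX HY.
  destruct (Req_dec a 1). { subst. assert (b * b <= 0) by nra. assert (b = 0) by nra. subst. assert (c * c * (Y * Y) <= 1 * (Y * Y)) by (apply Rmult_le_compat_r; nra). nra. }
  assert (Ha' : 0 < 1 - a * a) by nra.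
  assert (E : (1 - a*a) * (1 * 1 * (X * X + Y * Y) - ((a * X + b * Y) * (a * X + b * Y) + c * c * (Y * Y)))
    = ((1 - a*a) * X - a * b * Y) * ((1 - a*a) * X - a * b * Y) + ((1 - a*a)*(1-c*c) - b*b) * (Y * Y)) by ring.
  assert (0 <= ((1 - a*a) * X - a * b * Y) * ((1 - a*a) * X - a * b * Y)) by (pose proof (Rle_0_sqr ((1 - a*a) * X - a * b * Y)); unfold Rsqr in *; lra).
  assert (0 <= ((1 - a*a)*(1-c*c) - b*b) * (Y * Y)) by (apply Rmult_le_pos; nra).
  apply Rmult_le_reg_l with (1 - a*a). lra. nra.
Qed.

Lemma T_norm l1 l2 x : Cmod l1 <= 1 -> Cmod l2 <= 1 ->
  Cnorm2 x <= (1 - Cnorm2 l1) * (1 - Cnorm2 l2) -> opnorm_le (mkM2 l1 x Czero l2) 1.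
Proof.
  intros H1 H2 Hx. apply opnorm_of_sq. lra. intros [v1 v2]. unfold M2apply, Nv; simpl.
  assert (E1 : Cadd (Cmul Czero v1) (Cmul l2 v2) = Cmul l2 v2) by (destruct l2, v1, v2; unf; f_equal; ring).
  rewrite E1.
  pose proof (Cmod_triangle (Cmul l1 v1) (Cmul x v2)) as T. rewrite !Cmod_mul in T.
  rewrite <- !Cmod_sq. rewrite !Cmod_mul. rewrite <- !Cmod_sq in Hx.
  pose proof (Cmod_nonneg v1); pose proof (Cmod_nonneg v2); pose proof (Cmod_nonneg x).
  pose proof (Cmod_nonneg l1); pose proof (Cmod_nonneg l2).
  pose proof (Cmod_nonneg (Cadd (Cmul l1 v1) (Cmul x v2))).
  pose proof (Tnorm_real (Cmod l1) (Cmod x) (Cmod l2) (Cmod v1) (Cmod v2) ltac:(lra) ltac:(lra) H3 Hx H H0).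
  nra.
Qed.

Definition Umat (u v : Cx) : M2 := mkM2 u (Copp (Cconj v)) v (Cconj u).
Definition Ustar (u v : Cx) : M2 := mkM2 (Cconj u) (Cconj v) (Copp v) u.

Lemma U_iso u v y : Nv (M2apply (Umat u v) y) = (Cnorm2 u + Cnorm2 v) * Nv y.
Proof. destruct u, v, y as [[] []]; unfold Nv, M2apply, Umat; simpl; unf; ring. Qed.
Lemma Us_iso u v y : Nv (M2apply (Ustar u v) y) = (Cnorm2 u + Cnorm2 v) * Nv y.
Proof. destruct u, v, y as [[] []]; unfold Nv, M2apply, Ustar; simpl; unf; ring. Qed.

Lemma conj_norm u v T : Cnorm2 u + Cnorm2 v = 1 -> opnorm_le T 1 ->
  opnorm_le (M2mul (M2mul (Umat u v) T) (Ustar u v)) 1.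
Proof.
  intros Hu HT. apply opnorm_of_sq. lra. intro y.
  rewrite !M2apply_mul, U_iso, Hu. pose proof (opnorm_sq _ _ HT (M2apply (Ustar u v) y)).
  rewrite Us_iso, Hu in H. lra.
Qed.

Lemma conj_pi u v l1 x l2 :
  piA (M2mul (M2mul (Umat u v) (mkM2 l1 x Czero l2)) (Ustar u v)) =
  (Csub (Cmul (Csub l1 l2) (Cmul (Cconj u) v)) (Cmul x (Cmul v v)),
   Cmul (RtoC (Cnorm2 u + Cnorm2 v)) (Cadd l1 l2),
   Cmul (RtoC ((Cnorm2 u + Cnorm2 v) * (Cnorm2 u + Cnorm2 v))) (Cmul l1 l2)).
Proof.
  destruct u, v, l1, x, l2; unfold piA, M2mul, Umat, Ustar, M2tr, M2det; simpl; unf.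
  f_equal; [f_equal|]; f_equal; ring.
Qed.

Lemma omega_exists (Dp alpha : Cx) : Cnorm2 alpha = 1 ->
  exists w, Cnorm2 w = 1 /\ Cmul Dp w = Cmul alpha (RtoC (Cmod Dp)).
Proof.
  intro Ha. destruct (classic (Dp = Czero)) as [E|E].
  - exists Cone. subst. rewrite Cmod_0. split; unf; [ring|f_equal; ring].
  - pose proof (Cnorm2_pos _ E). pose proof (Cmod_sq Dp). pose proof (Cmod_nonneg Dp).
    assert (0 < Cmod Dp) by nra.
    exists (Cmul (Cconj Dp) (Cmul alpha (RtoC (/ Cmod Dp)))). split.
    + rewrite !Cnorm2_mul, Cnorm2_conj, Cnorm2_RtoC, Ha, <- H0. field. lra.
    + transitivity (Cmul alpha (RtoC (Cnorm2 Dp * / Cmod Dp))).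
      * destruct Dp, alpha; unf; f_equal; ring.
      * f_equal. f_equal. rewrite <- H0. field. lra.
Qed.

Lemma Build l1 l2 a t : in_closed_disc l1 -> in_closed_disc l2 -> a <> Czero ->
  0 < t <= 1 ->
  Rabs (Cmod (Csub l1 l2) * (sqrt t * sqrt (1 - t)) - Cmod a) <=
    sqrt (1 - Cnorm2 l1) * sqrt (1 - Cnorm2 l2) * t ->
  exists A, opnorm_le A 1 /\ piA A = (a, Cadd l1 l2, Cmul l1 l2).
Proof.
  intros H1 H2 Ha Ht Hk.
  set (ma := Cmod a). pose proof (Cnorm2_pos _ Ha). pose proof (Cmod_sq a).
  assert (Hma : 0 < ma) by (pose proof (Cmod_nonneg a); unfold ma; nra).
  set (alpha := Cmul a (RtoC (/ ma))).
  assert (Hal : Cnorm2 alpha = 1) by (unfold alpha; rewrite Cnorm2_mul, Cnorm2_RtoC, <- H0; fold ma; field; lra).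
  assert (Hala : Cmul alpha (RtoC ma) = a) by (unfold alpha; destruct a; unf; f_equal; field; lra).
  destruct (omega_exists (Csub l1 l2) alpha Hal) as [w [Hw HDw]].
  set (D := Cmod (Csub l1 l2)) in *.
  set (q := sqrt t * sqrt (1 - t)) in *.
  set (k := (D * q - ma) / t).
  assert (Hkt : k * t = D * q - ma) by (unfold k; field; lra).
  set (R := sqrt (1 - Cnorm2 l1) * sqrt (1 - Cnorm2 l2)) in *.
  assert (HR2 : R * R = (1 - Cnorm2 l1) * (1 - Cnorm2 l2)).
  { unfold R. pose proof (Cnorm2_le1 _ H1). pose proof (Cnorm2_le1 _ H2).
    replace (sqrt (1 - Cnorm2 l1) * sqrt (1 - Cnorm2 l2) * (sqrt (1 - Cnorm2 l1) * sqrt (1 - Cnorm2 l2)))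
      with ((sqrt (1 - Cnorm2 l1) * sqrt (1 - Cnorm2 l1)) * (sqrt (1 - Cnorm2 l2) * sqrt (1 - Cnorm2 l2))) by ring.
    rewrite !sqrt_sqrt; lra. }
  assert (HR0 : 0 <= R) by (unfold R; apply Rmult_le_pos; apply sqrt_pos).
  assert (Hkk : k * k <= R * R).
  { assert (Rabs k <= R).
    { apply Rmult_le_reg_r with t. lra. rewrite <- (Rabs_pos_eq t) at 1 by lra. rewrite <- Rabs_mult, Hkt. exact Hk. }
    pose proof (Rabs_pos k). assert (k * k = Rabs k * Rabs k) by (rewrite <- Rabs_mult; symmetry; apply Rabs_pos_eq; nra). nra. }
  set (x := Cmul (Cmul alpha (RtoC k)) (Cmul (Cconj w) (Cconj w))).
  set (u := RtoC (sqrt (1 - t))). set (v := Cmul (RtoC (sqrt t)) w).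
  assert (Huv : Cnorm2 u + Cnorm2 v = 1).
  { unfold u, v. rewrite Cnorm2_mul, !Cnorm2_RtoC, Hw, !sqrt_sqrt by lra. ring. }
  exists (M2mul (M2mul (Umat u v) (mkM2 l1 x Czero l2)) (Ustar u v)). split.
  - apply conj_norm; auto. apply T_norm; auto.
    unfold x. rewrite !Cnorm2_mul, Cnorm2_RtoC, !Cnorm2_conj, Hw, Hal. lra.
  - rewrite conj_pi, Huv.
    replace (Cmul (RtoC 1) (Cadd l1 l2)) with (Cadd l1 l2) by (destruct l1, l2; unf; f_equal; ring).
    replace (Cmul (RtoC (1 * 1)) (Cmul l1 l2)) with (Cmul l1 l2) by (destruct l1, l2; unf; f_equal; ring).
    f_equal; f_equal.
    assert (E1 : Cmul (Csub l1 l2) (Cmul (Cconj u) v) = Cmul (RtoC q) (Cmul (Csub l1 l2) w))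
      by (unfold u, v, q; destruct l1, l2, w; unf; f_equal; ring).
    assert (E2 : Cmul x (Cmul v v) = Cmul alpha (RtoC (k * (sqrt t * sqrt t) * (Cnorm2 w * Cnorm2 w))))
      by (unfold x, v; destruct alpha, w; unf; f_equal; ring).
    rewrite E1, E2, HDw, Hw, sqrt_sqrt by lra.
    rewrite <- Hala at 1.
    replace (k * t * (1 * 1)) with (D * q - ma) by (rewrite <- Hkt; ring).
    destruct alpha; unf; f_equal; ring.
Qed.

Lemma sqrt_mul_eq t y : 0 <= t <= 1 -> 0 <= y -> t * (1 - t) = y * y -> sqrt t * sqrt (1 - t) = y.
Proof.
  intros Ht Hy E. rewrite <- sqrt_mult by lra. rewrite E. apply sqrt_square; auto.
Qed.

Lemma P4 l1 l2 a : in_closed_disc l1 -> in_closed_disc l2 -> Cmod a <= Kb l1 l2 ->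
  exists A, opnorm_le A 1 /\ piA A = (a, Cadd l1 l2, Cmul l1 l2).
Proof.
  intros H1 H2 Ha.
  destruct (classic (a = Czero)) as [E|Ha0].
  { subst. exists (mkM2 l1 Czero Czero l2). split.
    - apply T_norm; auto. pose proof (Cnorm2_le1 _ H1); pose proof (Cnorm2_le1 _ H2). assert (E0 : Cnorm2 Czero = 0) by (unf; ring). rewrite E0. apply Rmult_le_pos; lra.
    - unfold piA, M2tr, M2det; simpl. f_equal. all: destruct l1, l2; unf; f_equal; ring. }
  pose proof (Cnorm2_pos _ Ha0). pose proof (Cmod_sq a). pose proof (Cmod_nonneg a).
  assert (Hma : 0 < Cmod a) by nra.
  set (D := Cmod (Csub l1 l2)). assert (HD0 : 0 <= D) by apply Cmod_nonneg.
  pose proof (Cnorm2_le1 _ H1); pose proof (Cnorm2_le1 _ H2).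
  pose proof (Cnorm2_nonneg l1); pose proof (Cnorm2_nonneg l2).
  set (R := sqrt (1 - Cnorm2 l1) * sqrt (1 - Cnorm2 l2)).
  assert (HR2 : R * R = (1 - Cnorm2 l1) * (1 - Cnorm2 l2)).
  { unfold R.
    replace (sqrt (1 - Cnorm2 l1) * sqrt (1 - Cnorm2 l2) * (sqrt (1 - Cnorm2 l1) * sqrt (1 - Cnorm2 l2)))
      with ((sqrt (1 - Cnorm2 l1) * sqrt (1 - Cnorm2 l1)) * (sqrt (1 - Cnorm2 l2) * sqrt (1 - Cnorm2 l2))) by ring.
    rewrite !sqrt_sqrt; lra. }
  assert (HR0 : 0 <= R) by (unfold R; apply Rmult_le_pos; apply sqrt_pos).
  destruct (Rle_dec (2 * Cmod a) D) as [Hs|Hs].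
  -
    set (rho := Cmod a / D).
    assert (HD : 0 < D) by lra.
    assert (Hrho : rho * D = Cmod a) by (unfold rho; field; lra).
    assert (Hrho0 : 0 < rho) by (unfold rho; apply Rdiv_lt_0_compat; lra).
    assert (Hrho1 : 2 * rho <= 1) by nra.
    set (sq := sqrt (1 - 4 * (rho * rho))).
    assert (Hsq : sq * sq = 1 - 4 * (rho * rho)) by (apply sqrt_sqrt; nra).
    assert (Hsq0 : 0 <= sq) by apply sqrt_pos.
    assert (Hsq1 : sq < 1) by nra.
    apply (Build l1 l2 a ((1 - sq) / 2)); auto. lra.
    rewrite (sqrt_mul_eq ((1 - sq)/2) rho) by nra. fold D.
    replace (D * rho - Cmod a) with 0 by lra. rewrite Rabs_R0. fold R. nra.
  -
    set (N := Cmod (Csub Cone (Cmul (Cconj l2) l1))).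
    assert (HN2 : N * N = D * D + R * R).
    { unfold N, D. rewrite HR2, !Cmod_sq. destruct l1, l2; unf; ring. }
    assert (HN0 : 0 <= N) by apply Cmod_nonneg.
    unfold Kb in Ha. fold N in Ha. replace (1 / 2 * sqrt (1 - Cnorm2 l1) * sqrt (1 - Cnorm2 l2)) with (1/2 * R) in Ha by (unfold R; ring).
    assert (HRN : R <= N) by nra. assert (HDN : D <= N) by nra.
    assert (HN : 0 < N) by nra.
    set (t := (1 + R / N) / 2).
    assert (HRN' : R / N <= 1) by (apply div_le1; lra).
    assert (HRN0 : 0 <= R / N) by (apply Rmult_le_pos; [lra | left; apply Rinv_0_lt_compat; lra]).
    assert (HRNe : R / N * N = R) by (field; lra).
    apply (Build l1 l2 a t); auto. unfold t; lra.
    rewrite (sqrt_mul_eq t (D / (2 * N))).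
    2: unfold t; lra.
    2: apply Rmult_le_pos; [lra | left; apply Rinv_0_lt_compat; lra].
    2: { unfold t. apply Rmult_eq_reg_r with (4 * (N * N)). 2: nra.
         replace ((1 + R / N) / 2 * (1 - (1 + R / N) / 2) * (4 * (N * N))) with (N * N - (R / N * N) * (R / N * N)) by (field; lra).
         rewrite HRNe. replace (D / (2 * N) * (D / (2 * N)) * (4 * (N * N))) with (D * D) by (field; lra). lra. }
    fold R D. apply Rabs_le. unfold t. split.
    + apply Rmult_le_reg_r with (2 * N). nra.
      replace (- (R * ((1 + R / N) / 2)) * (2 * N)) with (- (R * N + R * (R / N * N))) by (field; lra).
      replace ((D * (D / (2 * N)) - Cmod a) * (2 * N)) with (D * D - 2 * N * Cmod a) by (field; lra).
      rewrite HRNe. assert (N * Cmod a <= N * (1/2*N + 1/2*R)) by (apply Rmult_le_compat_l; lra). nra.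
    + apply Rmult_le_reg_r with (2 * N). nra.
      replace (R * ((1 + R / N) / 2) * (2 * N)) with (R * N + R * (R / N * N)) by (field; lra).
      replace ((D * (D / (2 * N)) - Cmod a) * (2 * N)) with (D * D - 2 * N * Cmod a) by (field; lra).
      rewrite HRNe. assert (N * D <= N * (2 * Cmod a)) by (apply Rmult_le_compat_l; lra).
      assert (D * D <= N * D) by (apply Rmult_le_compat_r; lra).
      assert (0 <= R * N + R * R) by nra. lra.
Qed.

Lemma W_ident (l1 l2 : Cx) (R N : R) :
  R * R = (1 - Cnorm2 l1) * (1 - Cnorm2 l2) ->
  N * N = Cnorm2 (Csub Cone (Cmul (Cconj l2) l1)) ->
  Cnorm2 (Csub (RtoC (2 * (1 - Cnorm2 (Cmul l1 l2) + R * N)))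
     (Cmul (Cadd l1 l2) (Cconj (Csub (Cadd l1 l2) (Cmul (Cconj (Cadd l1 l2)) (Cmul l1 l2))))))
  = ((N + R) * (1 - Cnorm2 (Cmul l1 l2) + R * N)) * ((N + R) * (1 - Cnorm2 (Cmul l1 l2) + R * N)).
Proof.
  intros HR HN. destruct l1 as [x1 y1], l2 as [x2 y2]. unf. nsatz.
Qed.

Lemma B_ident (l1 l2 : Cx) :
  (1 - Cnorm2 (Cmul l1 l2)) * (1 - Cnorm2 (Cmul l1 l2))
   - Cnorm2 (Csub (Cadd l1 l2) (Cmul (Cconj (Cadd l1 l2)) (Cmul l1 l2)))
  = (1 - Cnorm2 l1) * (1 - Cnorm2 l2) * Cnorm2 (Csub Cone (Cmul (Cconj l2) l1)).
Proof. destruct l1, l2; unf; ring. Qed.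

Lemma unimod_inner (b : Cx) sg : 0 <= sg -> sg * sg = 1 - Cnorm2 b ->
  Csub Cone (Cdiv (Cmul b (Cconj b)) (RtoC (1 + sg))) = RtoC sg.
Proof.
  intros H0 H.
  replace (Cmul b (Cconj b)) with (RtoC (Cnorm2 b)) by (destruct b; unf; f_equal; ring).
  replace (Cdiv (RtoC (Cnorm2 b)) (RtoC (1 + sg))) with (RtoC (Cnorm2 b / (1 + sg)))
    by (unf; f_equal; field; lra).
  unf. f_equal; [|ring]. apply Rmult_eq_reg_r with (1 + sg). 2: lra.
  field_simplify; [|lra]. nra.
Qed.

Lemma unimod_N (l1 l2 : Cx) : Cnorm2 l1 = 1 -> Cnorm2 l2 = 1 ->
  4 - Cnorm2 (Cadd l1 l2) = Cnorm2 (Csub Cone (Cmul (Cconj l2) l1)).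
Proof.
  intros E1 E2. destruct l1 as [x1 y1], l2 as [x2 y2]. unf. nsatz.
Qed.

Lemma inner_ident (s X : Cx) P RN : P < 1 -> 0 <= RN ->
  Csub Cone (Cdiv (Cmul (Cmul (RtoC (1/2)) s) (Cconj (Cmul X (RtoC (1/(1-P))))))
     (RtoC (1 + RN / (1 - P)))) =
  Cmul (Csub (RtoC (2 * (1 - P + RN))) (Cmul s (Cconj X))) (RtoC (1 / (2 * (1 - P + RN)))).
Proof.
  intros HP HRN. assert (0 < 1 - P + RN) by lra.
  assert (1 + RN / (1 - P) = (1 - P + RN) / (1 - P)) by (field; lra).
  rewrite H0. destruct s, X; unf; f_equal; field; lra.
Qed.

Lemma P5 l1 l2 s p beta :
  in_closed_disc l1 -> in_closed_disc l2 -> s = Cadd l1 l2 -> p = Cmul l1 l2 ->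
  Cmod beta <= 1 -> s = Cadd beta (Cmul (Cconj beta) p) ->
  (Cmod p = 1 -> beta = Cmul (RtoC (1/2)) s) ->
  Cmod (Csub Cone (Cdiv (Cmul (Cmul (RtoC (1/2)) s) (Cconj beta))
                    (RtoC (1 + sqrt (1 - Cnorm2 beta))))) = Kb l1 l2.
Proof.
  intros H1 H2 hs hp hb hsb hbp.
  pose proof (Cnorm2_le1 _ H1) as Q1; pose proof (Cnorm2_le1 _ H2) as Q2.
  pose proof (Cnorm2_nonneg l1); pose proof (Cnorm2_nonneg l2).
  pose proof (Cnorm2_le1 _ hb) as Qb. pose proof (Cnorm2_nonneg beta).
  set (N := Cmod (Csub Cone (Cmul (Cconj l2) l1))).
  assert (HN2 : N * N = Cnorm2 (Csub Cone (Cmul (Cconj l2) l1))) by apply Cmod_sq.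
  assert (HN0 : 0 <= N) by apply Cmod_nonneg.
  set (R := sqrt (1 - Cnorm2 l1) * sqrt (1 - Cnorm2 l2)).
  assert (HR2 : R * R = (1 - Cnorm2 l1) * (1 - Cnorm2 l2)).
  { unfold R.
    replace (sqrt (1 - Cnorm2 l1) * sqrt (1 - Cnorm2 l2) * (sqrt (1 - Cnorm2 l1) * sqrt (1 - Cnorm2 l2)))
      with ((sqrt (1 - Cnorm2 l1) * sqrt (1 - Cnorm2 l1)) * (sqrt (1 - Cnorm2 l2) * sqrt (1 - Cnorm2 l2))) by ring.
    rewrite !sqrt_sqrt; lra. }
  assert (HR0 : 0 <= R) by (unfold R; apply Rmult_le_pos; apply sqrt_pos).
  assert (HKb : Kb l1 l2 = (N + R) / 2) by (unfold Kb, R, N; field).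
  rewrite HKb.
  assert (HP : Cnorm2 p = Cnorm2 l1 * Cnorm2 l2) by (rewrite hp; apply Cnorm2_mul).
  destruct (Req_dec (Cnorm2 p) 1) as [Hp1|Hp1].
  -
    assert (E1 : Cnorm2 l1 = 1) by nra. assert (E2 : Cnorm2 l2 = 1) by nra.
    assert (HR : R = 0) by (unfold R; rewrite E1; replace (1-1) with 0 by ring; rewrite sqrt_0; ring).
    assert (Hp1' : Cmod p = 1) by (apply Cmod_eq_sq; lra).
    specialize (hbp Hp1').
    set (c2 := Cnorm2 beta) in *.
    set (sg := sqrt (1 - c2)).
    assert (Hsg : sg * sg = 1 - c2) by (apply sqrt_sqrt; lra).
    assert (Hsg0 : 0 <= sg) by apply sqrt_pos.
    assert (Hin : Csub Cone (Cdiv (Cmul (Cmul (RtoC (1/2)) s) (Cconj beta)) (RtoC (1 + sg))) = RtoC sg).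
    { rewrite <- hbp. apply unimod_inner; auto. }
    rewrite Hin, Cmod_RtoC by lra. rewrite HR.
    assert (sg * sg = (N/2) * (N/2)).
    { rewrite Hsg. unfold c2. rewrite hbp, Cnorm2_scale, hs.
      assert (4 - Cnorm2 (Cadd l1 l2) = N * N).
      { rewrite HN2. apply unimod_N; auto. }
      nra. }
    nra.
  - assert (HPlt : Cnorm2 p < 1) by nra.
    set (P := Cnorm2 p) in *.
    set (X := Csub s (Cmul (Cconj s) p)).
    assert (HbX : Cmul beta (RtoC (1 - P)) = X).
    { unfold X, P. rewrite hsb at 1 2. destruct beta, p; unf; f_equal; ring. }
    assert (Hb : beta = Cmul X (RtoC (1 / (1 - P)))).
    { rewrite <- HbX. destruct beta; unf; f_equal; field; lra. }
    assert (HbN : Cnorm2 beta * ((1 - P) * (1 - P)) = Cnorm2 X).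
    { rewrite <- HbX, Cnorm2_mul, Cnorm2_RtoC. ring. }
    pose proof (B_ident l1 l2) as BI. rewrite <- hs, <- hp in BI. fold P X in BI.
    rewrite <- HR2, <- HN2 in BI.
    assert (Hsq : sqrt (1 - Cnorm2 beta) = R * N / (1 - P)).
    { apply sqrt_eq_of_sq. apply Rmult_le_pos; [nra| left; apply Rinv_0_lt_compat; lra].
      apply Rmult_eq_reg_r with ((1 - P) * (1 - P)). 2: nra.
      replace (R * N / (1 - P) * (R * N / (1 - P)) * ((1 - P) * (1 - P))) with (R * R * (N * N)) by (field; lra).
      rewrite <- BI. rewrite <- HbN. ring. }
    rewrite Hsq. rewrite Hb at 1. rewrite inner_ident by nra.
    rewrite Cmod_mul, Cmod_RtoC.
    2: { apply Rmult_le_pos; [lra| left; apply Rinv_0_lt_compat; nra]. }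
    pose proof (W_ident l1 l2 R N HR2 HN2) as WI. rewrite <- hs, <- hp in WI. fold P X in WI.
    rewrite (Cmod_eq_sq _ ((N + R) * (1 - P + R * N))) by (auto; apply Rmult_le_pos; nra).
    field. nra.
Qed.
Theorem theorem5p3 (l1 l2 s p beta a : Cx)
  (hl1 : in_closed_disc l1) (hl2 : in_closed_disc l2)
  (hs : s = Cadd l1 l2) (hp : p = Cmul l1 l2)
  (hbeta : Cmod beta <= 1)
  (hsb : s = Cadd beta (Cmul (Cconj beta) p))
  (hbeta_p : Cmod p = 1 -> beta = Cmul (RtoC (1/2)) s) :
  let s1 := in_closure in_P (a, s, p) in
  let s2 := in_closure in_Pmu (a, s, p) in
  let s3 := Cmod a <= Cmod (Csub Cone
              (Cdiv (Cmul (Cmul (RtoC (1/2)) s) (Cconj beta))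
                    (RtoC (1 + sqrt (1 - Cnorm2 beta))))) in
  let s4 := Cmod a <= (1/2) * Cmod (Csub Cone (Cmul (Cconj l2) l1))
              + (1/2) * sqrt (1 - Cnorm2 l1) * sqrt (1 - Cnorm2 l2) in
  let s5 := forall z, in_open_disc z -> Cmod (Psi z a s p) <= 1 in
  let s6 := exists A, opnorm_le A 1 /\ piA A = (a, s, p) in
  let s7 := exists A, muE_le1 A /\ piA A = (a, s, p) in
  (s1 <-> s2) /\ (s1 <-> s3) /\ (s1 <-> s4) /\ (s1 <-> s5) /\
  (s1 <-> s6) /\ (s1 <-> s7).
Proof.
  intros s1 s2 s3 s4 s5 s6 s7.
  assert (E3 : s3 <-> s4).
  { unfold s3, s4. rewrite (P5 l1 l2 s p beta); auto. unfold Kb. tauto. }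
  assert (H46 : s4 -> s6).
  { intro H. unfold s6. rewrite hs, hp. apply P4; auto. }
  assert (H5S : S5p a s p -> s4).
  { intro H. unfold s4. fold (Kb l1 l2). apply P3; auto. rewrite <- hs, <- hp; auto. }
  assert (E5 : s5 <-> S5p a s p).
  { unfold s5. rewrite hs, hp. symmetry. apply P8; auto. }
  assert (H67 : s6 -> s7).
  { intros [A [HA HpA]]. exists A; split; auto. apply P1; auto. }
  assert (H7S : s7 -> S5p a s p).
  { intros [A [HA HpA]]. apply (P2 A); auto. }
  assert (H61 : s6 -> s1).
  { intros [A [HA HpA]]. unfold s1. rewrite <- HpA. apply P6a; auto. }
  assert (H62 : s6 -> s2).
  { intros [A [HA HpA]]. unfold s2. rewrite <- HpA. apply P6b; auto. }
  assert (H1S : s1 -> S5p a s p) by apply P7a.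
  assert (H2S : s2 -> S5p a s p) by apply P7b.
  repeat split; intros; tauto.
Qed.
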